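(* Let $s$ be a Sturmian word having a factorization $s=U_1U_2\cdots U_n\cdots$ where each $U_i$ ($i\ge1$) is a non-empty prefix of $s$, and let $c$ be the first letter of $s$. Then $U_1\neq c^p$ for every integer $p\ge 1$.
   Context: A Sturmian word is an infinite word $s\in\{a,b\}^{\omega}$ that is aperiodic (not ultimately periodic) and balanced: for all factors $u,v$ of $s$ with $|u|=|v|$ one has $||u|_x-|v|_x|\le 1$ for $x\in\{a,b\}$, where $|u|_x$ is the number of occurrences of $x$ in $u$. *)

(* Defs.v *)
From HB Require Import structures.
From mathcomp Require Import all_boot.
Set Implicit Arguments. Unset Strict Implicit. Unset Printing Implicit Defensive.

Inductive letter := la | lb.
Definition letter_eqb (x y : letter) : bool :=
  match x, y with la, la | lb, lb => true | _, _ => false end.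
Lemma letter_eqP : Equality.axiom letter_eqb.
Proof. by case; case; constructor. Qed.
HB.instance Definition _ := hasDecEq.Build letter letter_eqP.

Definition word := nat -> letter.

Definition factor (s : word) (i n : nat) : seq letter :=
  [seq s (i + k) | k <- iota 0 n].

Definition word_prefix (s : word) (n : nat) : seq letter := factor s 0 n.

Definition occ (x : letter) (u : seq letter) : nat := count_mem x u.

Definition balanced (s : word) : Prop :=
  forall (i j n : nat) (x : letter),
    occ x (factor s i n) <= occ x (factor s j n) + 1.

Definition ultimately_periodic (s : word) : Prop :=
  exists p N : nat, 0 < p /\ forall n, N <= n -> s (n + p) = s n.

Definition sturmian (s : word) : Prop :=
  ~ ultimately_periodic s /\ balanced s.

(* starting position of U_i in U_0 U_1 U_2 ... (0-indexed blocks) *)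
Definition block_start (U : nat -> seq letter) (i : nat) : nat :=
  \sum_(j < i) size (U j).

(* s = U_0 U_1 U_2 ... (all blocks non-empty, so they cover s) *)
Definition is_factorization (s : word) (U : nat -> seq letter) : Prop :=
  (forall i, 0 < size (U i)) /\
  (forall i, factor s (block_start U i) (size (U i)) = U i).

(* Main.v *)
Require Import Defs.
From mathcomp Require Import all_boot.
From mathcomp Require Import zify.
From Stdlib Require Classical_Prop.

Lemma nth_factor (s : word) i n k : k < n -> nth la (factor s i n) k = s (i + k).
Proof. by move=> kn; rewrite /factor (nth_map 0) ?size_iota // nth_iota. Qed.

Lemma bsS U i : block_start U i.+1 = block_start U i + size (U i).
Proof. by rewrite /block_start big_ord_recr. Qed.

Theorem mainTheorem4 (s : word) (U : nat -> seq letter) :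
  sturmian s ->
  is_factorization s U ->
  (forall i, U i = word_prefix s (size (U i))) ->
  forall p : nat, 1 <= p -> U 0 <> nseq p (s 0).
Proof.
move=> [nup _] [Upos Ufac] Upre p p1 U0.
have key : forall i k, k < size (U i) -> s (block_start U i + k) = s k.
  move=> i k kl.
  have := nth_factor s (block_start U i) _ _ kl; rewrite Ufac => <-.
  by rewrite {1}Upre /word_prefix nth_factor.
have exn : exists n, s n != s 0.
  case: (Classical_Prop.classic (exists n, s n != s 0)) => // H; exfalso; apply: nup; exists 1, 0; split => // n _.
  have E : forall m, s m = s 0.
    by move=> m; case: (s m =P s 0) => // /eqP ne; case: H; exists m.
  by rewrite !E.
case: (ex_minnP exn) => m sm mmin.
have blk : forall m, exists i, block_start U i <= m < block_start U i.+1.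
  elim=> [|n [i /andP [h1 h2]]].
    by exists 0; rewrite bsS /block_start big_ord0 Upos.
  case: (ltnP n.+1 (block_start U i.+1)) => h3.
    by exists i; rewrite h3 andbT; lia.
  exists i.+1; rewrite (bsS U i.+1); have := Upos i.+1; lia.
have [i /andP [h1 h2]] := blk m.
case: i h1 h2 => [|i] h1 h2.
  move: h2; rewrite bsS /block_start big_ord0 add0n => h2.
  have F := Ufac 0; rewrite /block_start big_ord0 in F.
  have := nth_factor s 0 _ _ h2; rewrite F U0 nth_nseq.
  have h2p : m < p by move: h2; rewrite U0 size_nseq.
  rewrite h2p add0n => E.
  by move: sm; rewrite -E eqxx.
have bpos : 0 < block_start U i.+1.
  by rewrite /block_start big_ord_recl /= (leq_trans (Upos 0) (leq_addr _ _)).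
have hk : m - block_start U i.+1 < size (U i.+1) by move: h2; rewrite bsS; lia.
have := key _ _ hk; rewrite subnKC // => E.
have := mmin (m - block_start U i.+1).
rewrite -E sm => /(_ isT); lia.
Qed.
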